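(* Let $a,d\in\mathbb{N}$ and $m,n\in\mathbb{N}$ with $m,n\ge 2$. Let $X_1,\dots,X_m$ be i.i.d. random variables uniformly distributed on $\{1,\dots,a\}$ and $Y_1,\dots,Y_n$ i.i.d. random variables uniformly distributed on $\{1,\dots,d\}$, independent of the $X_i$. Let $X^{(1)}\ge X^{(2)}$ be the largest and second largest values among $X_1,\dots,X_m$ (counted with multiplicity), and similarly $Y^{(1)}\ge Y^{(2)}$ among $Y_1,\dots,Y_n$. Let $P=\Pr\left(X^{(1)}\le Y^{(1)}\text{ and }X^{(2)}\le Y^{(2)}\right)$. If $a\ge d$, then \begin{align*} P&= \sum_{y_1=2}^{d} \sum_{y_2=1}^{y_{1}-1} \frac{n\big(y_2^{n-1}-(y_2-1)^{n-1}\big)\big(m(y_1-y_2)y_{2}^{m-1}+y_{2}^{m} \big)}{a^m d^n}\\ & \quad + \sum_{y_{1}=1}^{d}\frac{\big( y_1^n-(y_1-1)^{n}-n(y_1-1)^{n-1} \big)\, y_{1}^{m}}{a^m d^n}, \end{align*} and if $a\le d$, then \begin{align*} P&= \sum_{y_1=2}^{a} \sum_{y_2=1}^{y_{1}-1} \frac{n\big(y_2^{n-1}-(y_2-1)^{n-1}\big)\big(m(y_1-y_2)y_{2}^{m-1}+y_{2}^{m} \big)}{a^m d^n} \\ & \quad + \sum_{y_{1}=1}^{a}\frac{\big( y_1^n-(y_1-1)^{n}-n(y_1-1)^{n-1} \big)\, y_{1}^{m}}{a^m d^n} \\ & \quad + \sum_{y_{1}=a+1}^d \sum_{y_2=1}^a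 \frac{n\big(y_2^{n-1}-(y_2-1)^{n-1}\big)\big(m(a-y_2)y_{2}^{m-1}+y_{2}^{m} \big)}{a^m d^n} \\ & \quad + \frac{a^m d^n-n(d-a)a^{n+m-1}-a^{m+n}}{a^m d^n}. \end{align*}
   Context: $X^{(i)}$ denotes the $i$-th largest of the dice values (order statistics). In the paper's notation the event is $\{X_i\}_m>_{2,0}\{Y_j\}_n$: none of the comparisons $X^{(1)}>Y^{(1)}$, $X^{(2)}>Y^{(2)}$ holds (ties go to the defender). *)

(* Defs.v *)
From mathcomp Require Import all_boot all_order all_algebra.
Set Implicit Arguments. Unset Strict Implicit. Unset Printing Implicit Defensive.
Import GRing.Theory Num.Theory.

Definition kth_largest (s : seq nat) (k : nat) : nat := nth 0 (sort geq s) k.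

(* Outcome of m dice with faces {1..a}: x : 'I_m -> 'I_a, die i shows (x i).+1 *)
Definition dice_vals (m a : nat) (x : {ffun 'I_m -> 'I_a}) : seq nat :=
  [seq (val (x i)).+1 | i <- enum 'I_m].

Definition defender_wins_both (m a n d : nat)
    (xy : {ffun 'I_m -> 'I_a} * {ffun 'I_n -> 'I_d}) : bool :=
  (kth_largest (dice_vals xy.1) 0 <= kth_largest (dice_vals xy.2) 0) &&
  (kth_largest (dice_vals xy.1) 1 <= kth_largest (dice_vals xy.2) 1).

(* Probability under X_1..X_m iid uniform on {1..a}, Y_1..Y_n iid uniform on
   {1..d}, all independent: the uniform measure on {1..a}^m x {1..d}^n. *)
Definition prob_event (m a n d : nat) : rat :=
  (#|[set xy : {ffun 'I_m -> 'I_a} * {ffun 'I_n -> 'I_d}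
        | defender_wins_both xy]|%:R / (a ^ m * d ^ n)%:R)%R.

(* Main.v *)
Require Import Defs.
From mathcomp Require Import all_boot all_order all_algebra.
From mathcomp Require Import zify ring lra.
Import GRing.Theory Num.Theory.
Set Implicit Arguments. Unset Strict Implicit. Unset Printing Implicit Defensive.

Definition cnt (k c t : nat) (x : {ffun 'I_k -> 'I_c}) : nat := #|[set i | t <= x i]|.

Lemma cE (T : finType) (P : pred T) : count P (enum T) = #|[set x | P x]|.
Proof. rewrite -sum1_count big_enum_cond /= sum1_card. apply: eq_card => x. by rewrite inE. Qed.

Lemma card_sum (T : finType) (P : pred T) : #|[set x | P x]| = \sum_(x : T) (P x : nat).
Proof.
rewrite -sum1_card big_mkcond; apply: eq_bigr => x _; rewrite inE; by case: (P x).
Qed.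

Lemma count_iota_int (c u v : nat) : v <= u ->
  count (fun j => v <= j < u) (iota 0 c) = minn u c - minn v c.
Proof.
move=> vu; elim: c => [|c IH]; first by rewrite /= !minn0.
rewrite -addn1 iotaD count_cat IH /= add0n addn0.
case: (leqP v c) => vc; case: (ltnP c u) => cu /=; lia.
Qed.

Lemma card_ord_int (c u v : nat) : v <= u ->
  #|[set j : 'I_c | v <= j < u]| = minn u c - minn v c.
Proof.
move=> vu; rewrite -(count_iota_int c vu) -val_enum_ord count_map cE.
by apply: eq_card => j; rewrite !inE.
Qed.

Lemma card_ord_lt (c v : nat) : #|[set j : 'I_c | j < v]| = minn v c.
Proof.
have := card_ord_int c (leq0n v); rewrite min0n subn0 => <-.
by apply: eq_card => j; rewrite !inE.
Qed.

Lemma cnt0P (k c v : nat) (x : {ffun 'I_k -> 'I_c}) :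
  (cnt v x == 0) = (x \in ffun_on (mem [set j : 'I_c | j < v])).
Proof.
rewrite /cnt cards_eq0; apply/eqP/ffun_onP.
  move=> H i; rewrite inE ltnNge; apply/negP => vi.
  by have := in_set0 i; rewrite -H inE vi.
move=> H; apply/setP => i; rewrite inE in_set0; have := H i; rewrite inE ltnNge.
by move/negbTE.
Qed.

Lemma cnt_mono (k c t t' : nat) (x : {ffun 'I_k -> 'I_c}) : t <= t' -> cnt t' x <= cnt t x.
Proof.
move=> tt; apply: subset_leq_card; apply/subsetP => i; rewrite !inE; exact: leq_trans.
Qed.

Section Cnt.
Variables (k c u v : nat).
Hypothesis vu : v <= u.
Let A := [set j : 'I_c | j < v].
Let B := [set j : 'I_c | v <= j < u].
Let F (j : 'I_k) : 'I_k -> pred 'I_c :=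
  fun i => if i == j then (fun z => z \in B) else (fun z => z \in A).

Lemma famP (x : {ffun 'I_k -> 'I_c}) (j : 'I_k) :
  (x \in family (F j)) = ([set i | v <= x i] == [set j]) && (cnt u x == 0).
Proof.
rewrite cnt0P; apply/familyP/andP.
  move=> H; split.
    apply/eqP/setP => i; rewrite !inE; have := H i; rewrite /F.
    case: (i == j) => /=; rewrite !inE; first by case/andP.
    by rewrite ltnNge => /negbTE.
  apply/ffun_onP => i; have := H i; rewrite /F !inE.
  case: (i == j) => /=; rewrite !inE; first by case/andP.
  by move=> H'; apply: leq_trans H' vu.
case=> /eqP S /ffun_onP U i; rewrite /F.
have := U i; rewrite inE => xu.
have := f_equal (fun X : {set 'I_k} => i \in X) S; rewrite !inE => Si.
case: eqP => ij /=; rewrite !inE.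
  by rewrite xu andbT Si; apply/eqP.
by rewrite ltnNge Si; apply/eqP.
Qed.

Lemma split_ind (x : {ffun 'I_k -> 'I_c}) :
  ((cnt u x == 0) && (cnt v x <= 1) : nat) = (cnt v x == 0) + \sum_j (x \in family (F j) : nat).
Proof.
under eq_bigr do rewrite famP.
case h: (cnt v x == 0).
  rewrite big1 ?addn0; last first.
    move=> j _; case E: ([set i | v <= x i] == [set j]) => //=.
    by move: h; rewrite /cnt (eqP E) cards1.
  have -> : cnt u x == 0.
    by rewrite -leqn0; apply: leq_trans (cnt_mono x vu) _; rewrite leqn0.
  by rewrite (eqP h).
rewrite add0n.
case h2: ((cnt u x == 0) && (cnt v x <= 1)).
  case/andP: h2 => h3 h4.
  have : cnt v x == 1 by rewrite eqn_leq h4 lt0n h.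
  case/cards1P => j0 Ej0.
  rewrite (bigD1 j0) //= Ej0 eqxx h3 big1 //= => j ne.
  case E: ([set j0] == [set j]) => //=; move/eqP/set1_inj: E => E.
  by rewrite E eqxx in ne.
rewrite big1 // => j _; case E: ([set i | v <= x i] == [set j]) => //=.
case h3: (cnt u x == 0) => //.
by move: h2; rewrite h3 /cnt (eqP E) cards1.
Qed.

Lemma count_P :
  #|[set x : {ffun 'I_k -> 'I_c} | (cnt u x == 0) && (cnt v x <= 1)]| =
  minn v c ^ k + k * (minn u c - minn v c) * minn v c ^ k.-1.
Proof.
rewrite card_sum (eq_bigr _ (fun x _ => split_ind x)) big_split /= exchange_big /=.
congr (_ + _).
  rewrite -(card_sum (fun x => cnt v x == 0)).
  rewrite (eq_card (B := ffun_on (mem A))); last by move=> x; rewrite inE cnt0P.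
  by rewrite card_ffun_on card_ord card_ord_lt.
rewrite (eq_bigr (fun _ => (minn u c - minn v c) * minn v c ^ k.-1)).
  by rewrite sum_nat_const card_ord mulnA.
move=> j _; rewrite -(card_sum (fun x => x \in family (F j))).
rewrite (eq_card (B := family (F j))); last by move=> x; rewrite inE.
rewrite card_family foldrE big_map big_enum /= (bigD1 j) //= /F eqxx.
rewrite card_ord_int // (eq_bigr (fun _ => minn v c)); last first.
  by move=> i /negbTE ->; rewrite card_ord_lt.
by rewrite prod_nat_const cardC1 card_ord.
Qed.
End Cnt.

Lemma sorted_nth_le (s : seq nat) (k v : nat) : sorted geq s -> k < size s ->
  (nth 0 s k <= v) = (count (fun z => v < z) s <= k).
Proof.
elim: s k => [|h s IH] k //= Hs Hk.
have Hall : all (fun z => z <= h) s.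
  by apply: (order_path_min (leT := geq)) => // a b c' H1 H2; apply: leq_trans H2 H1.
have Hs' : sorted geq s by apply: (path_sorted Hs).
have c0 : h <= v -> count (fun z => v < z) s = 0.
  move=> hv; apply/eqP; rewrite -leqn0 leqNgt -has_count; apply/hasPn => z zs.
  by rewrite -leqNgt; apply: leq_trans hv; move/allP: Hall => /(_ z zs).
case: k Hk => [|k] Hk /=.
  case: (leqP h v) => hv; first by rewrite c0.
  by rewrite add1n.
case: (leqP h v) => hv.
  rewrite c0 // add0n leq0n; apply: leq_trans hv.
  move/allP: Hall; apply. by apply: mem_nth.
by rewrite add1n ltnS IH.
Qed.

Lemma count_dice (m a t : nat) (x : {ffun 'I_m -> 'I_a}) :
  count (fun z => t < z) (dice_vals x) = cnt t x.
Proof.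
rewrite /dice_vals count_map /cnt cardsE cardE -size_filter; congr size.
rewrite {2}/enum_mem -enumT; apply: eq_filter => i /=. by rewrite ltnS. Qed.

Lemma kth_char (m a k t : nat) (x : {ffun 'I_m -> 'I_a}) : k < m ->
  (kth_largest (dice_vals x) k <= t) = (cnt t x <= k).
Proof.
move=> km. rewrite /kth_largest sorted_nth_le ?count_sort ?count_dice //.
  by apply: sort_sorted => p q; apply: leq_total.
by rewrite size_sort size_map size_enum_ord.
Qed.

Local Open Scope ring_scope.
Lemma ind4 (al be ga de : nat) : (al <= be)%N -> (be <= ga)%N -> (ga <= de)%N ->
  ((((al == 0) && (0 < be)) && ((ga <= 1) && (1 < de)))%N%:R : rat) =
  ((al == 0) && (ga <= 1))%N%:R - ((be == 0) && (ga <= 1))%N%:R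
  - ((al == 0) && (de <= 1))%N%:R + ((be == 0) && (de <= 1))%N%:R.
Proof.
case: al => [|al]; last first.
  move=> h1 h2 h3; have -> : (be == 0) = false by apply/negbTE; rewrite -lt0n; apply: leq_trans h1.
  rewrite /= ?(mulr1n, mulr0n); lra.
case: be => [|be] _ h2 h3 /=.
  rewrite /= ?andbF ?(mulr1n, mulr0n); lra.
case: ga h2 h3 => [|[|ga]] h2 h3 //=; case: de h3 => [|[|de]] h3 //=; rewrite ?(mulr1n, mulr0n); lra.
Qed.
Lemma ind2 (al be : nat) : (al <= be)%N ->
  ((((al == 0) && (0 < be)) && ((al <= 1) && (1 < be)))%N%:R : rat) =
  ((al == 0) && (al <= 1))%N%:R - ((al == 0) && (be <= 1))%N%:R.
Proof.
case: al => [|al] //= h; first by case: be h => [|[|be]] h //=; rewrite ?(mulr1n, mulr0n); lra.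
Qed.

Lemma pick_sum (lo hi k : nat) (H : nat -> rat) : (lo <= k < hi)%N ->
  \sum_(lo <= u < hi) (if u == k then H u else 0) = H k.
Proof.
move=> kr; rewrite (bigD1_seq k) /= ?mem_index_iota ?iota_uniq // eqxx big1_seq ?addr0 //.
by move=> u /andP[/negbTE -> _].
Qed.

Section Y.
Variables (n d : nat).
Hypotheses (hn : (2 <= n)%N) (hd : (1 <= d)%N).
Let K0 (y : {ffun 'I_n -> 'I_d}) := kth_largest (dice_vals y) 0.
Let K1 (y : {ffun 'I_n -> 'I_d}) := kth_largest (dice_vals y) 1.
Let n0 : (0 < n)%N. Proof. by apply: leq_trans hn. Qed.
Let n1 : (1 < n)%N. Proof. by []. Qed.

Lemma cnt_d (y : {ffun 'I_n -> 'I_d}) : cnt d y = 0%N.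
Proof. apply/eqP; rewrite cards_eq0; apply/eqP/setP => i; by rewrite !inE leqNgt ltn_ord. Qed.

Lemma cnt_0 (y : {ffun 'I_n -> 'I_d}) : cnt 0 y = n.
Proof.
rewrite /cnt (_ : [set i | 0 <= y i]%N = setT) ?cardsT ?card_ord //.
Qed.

Lemma K_bounds (y : {ffun 'I_n -> 'I_d}) : [&& (1 <= K1 y)%N, (K1 y <= K0 y)%N & (K0 y <= d)%N].
Proof.
have h0 : (cnt (K0 y) y <= 0)%N by rewrite -(kth_char (k:=0) _ y n0).
apply/and3P; split.
- rewrite lt0n; apply/negP => /eqP h.
  have := leqnn (K1 y); rewrite {2}h /K1 (kth_char (k:=1)) // cnt_0.
  by rewrite leqNgt hn.
- by rewrite /K1 (kth_char (k:=1)) //; apply: leq_trans h0 _.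
- by rewrite /K0 (kth_char (k:=0)) // cnt_d.
Qed.

Definition hcnt u v := \sum_(y : {ffun 'I_n -> 'I_d}) ((K0 y == u) && (K1 y == v))%N%:R : rat.

Lemma pick2 (G : nat -> nat -> rat) (a b : nat) : (1 <= a < d.+1)%N -> (1 <= b < d.+1)%N ->
  \sum_(1 <= u < d.+1) \sum_(1 <= v < d.+1) G u v * ((a == u) && (b == v))%N%:R = G a b.
Proof.
move=> ha hb.
transitivity (\sum_(1 <= u < d.+1) (if u == a then
   \sum_(1 <= v < d.+1) (if v == b then G u v else 0) else 0)).
  apply: eq_bigr => u _; case: (u =P a) => [->|ne].
    apply: eq_bigr => v _; rewrite eqxx /=; case: (v =P b) => [->|nv].
      by rewrite eqxx mulr1.
    by rewrite (_ : (b == v) = false) ?mulr0 //; apply/negbTE/eqP => e; apply: nv.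
  apply: big1 => v _; rewrite (_ : (a == u) = false) ?mulr0 //.
  by apply/negbTE/eqP => e; apply: ne.
by rewrite pick_sum // pick_sum.
Qed.

Lemma partition_y (G : nat -> nat -> rat) :
  \sum_(y : {ffun 'I_n -> 'I_d}) G (K0 y) (K1 y) =
  \sum_(1 <= u < d.+1) \sum_(1 <= v < d.+1) G u v * hcnt u v.
Proof.
transitivity (\sum_(y : {ffun 'I_n -> 'I_d}) \sum_(1<=u<d.+1) \sum_(1<=v<d.+1)
   G u v * ((K0 y == u) && (K1 y == v))%N%:R).
  apply: eq_bigr => y _; have /and3P[b1 b2 b3] := K_bounds y.
  rewrite pick2 // ?b1 ?ltnS ?(leq_trans b2 b3) ?(leq_trans b1 b2) //.
rewrite exchange_big; apply: eq_bigr => u _; rewrite exchange_big; apply: eq_bigr => v _.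
by rewrite /hcnt mulr_sumr.
Qed.
Lemma K0eq (y : {ffun 'I_n -> 'I_d}) u : (0 < u)%N ->
  (K0 y == u) = (cnt u y == 0%N) && (0 < cnt u.-1 y)%N.
Proof.
move=> u0; rewrite eqn_leq /K0 (kth_char (k:=0)) // leqn0; congr andb.
have -> : (u <= kth_largest (dice_vals y) 0)%N = (u.-1 < kth_largest (dice_vals y) 0)%N.
  by rewrite prednK.
by rewrite ltnNge (kth_char (k:=0)) // leqn0 lt0n.
Qed.

Lemma K1eq (y : {ffun 'I_n -> 'I_d}) v : (0 < v)%N ->
  (K1 y == v) = (cnt v y <= 1)%N && (1 < cnt v.-1 y)%N.
Proof.
move=> v0; rewrite eqn_leq /K1 (kth_char (k:=1)) //; congr andb.
have -> : (v <= kth_largest (dice_vals y) 1)%N = (v.-1 < kth_largest (dice_vals y) 1)%N.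
  by rewrite prednK.
by rewrite ltnNge (kth_char (k:=1)) // -ltnNge.
Qed.

Lemma Psum p q : (q <= p)%N -> (p <= d)%N ->
  \sum_(y : {ffun 'I_n -> 'I_d}) ((cnt p y == 0%N) && (cnt q y <= 1)%N)%N%:R =
  (q ^ n + n * (p - q) * q ^ n.-1)%N%:R :> rat.
Proof.
move=> qp pd.
rewrite -natr_sum -(card_sum (fun y : {ffun 'I_n -> 'I_d} => (cnt p y == 0%N) && (cnt q y <= 1)%N)).
by rewrite count_P // (minn_idPl pd) (minn_idPl (leq_trans qp pd)).
Qed.

Definition hnv v : rat := n%:R * (v%:R ^+ n.-1 - (v.-1)%:R ^+ n.-1).
Definition hdu u : rat := u%:R ^+ n - (u.-1)%:R ^+ n - n%:R * (u.-1)%:R ^+ n.-1.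

Lemma h_lt u v : (1 <= v)%N -> (v < u)%N -> (u <= d)%N -> hcnt u v = hnv v.
Proof.
move=> v1 vu ud; rewrite /hcnt.
rewrite (eq_bigr (fun y => ((cnt u y == 0%N) && (cnt v y <= 1)%N)%N%:R
   - ((cnt u.-1 y == 0%N) && (cnt v y <= 1)%N)%N%:R
   - ((cnt u y == 0%N) && (cnt v.-1 y <= 1)%N)%N%:R
   + ((cnt u.-1 y == 0%N) && (cnt v.-1 y <= 1)%N)%N%:R)); last first.
  move=> y _; rewrite K0eq ?K1eq; [|lia|lia].
  by apply: ind4; apply: cnt_mono; lia.
rewrite big_split /= !sumrB !Psum; try lia.
case: v v1 vu => // v' _ vu.
have [w ->] : exists w, u = (v'.+2 + w)%N by exists (u - v'.+2)%N; lia.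
have -> : (v'.+2 + w).-1 = (v'.+1 + w)%N by lia.
have -> : (v'.+2 + w - v'.+1 = w.+1)%N by lia.
have -> : (v'.+1 + w - v'.+1 = w)%N by lia.
have -> : (v'.+2 + w - v' = w.+2)%N by lia.
have -> : (v'.+1 + w - v' = w.+1)%N by lia.
rewrite /hnv /= !(natrD, natrM, natrX, mulrSr); ring.
Qed.

Lemma h_eq u : (1 <= u)%N -> (u <= d)%N -> hcnt u u = hdu u.
Proof.
move=> u1 ud; rewrite /hcnt.
rewrite (eq_bigr (fun y => ((cnt u y == 0%N) && (cnt u y <= 1)%N)%N%:R
   - ((cnt u y == 0%N) && (cnt u.-1 y <= 1)%N)%N%:R)); last first.
  move=> y _; rewrite K0eq ?K1eq; [|lia|lia].
  by apply: ind2; apply: cnt_mono; lia.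
rewrite !sumrB !Psum; try lia.
case: u u1 ud => // u' _ ud.
have -> : (u'.+1 - u'.+1 = 0)%N by lia.
have -> : (u'.+1 - u' = 1)%N by lia.
rewrite /hdu /= !(natrD, natrM, natrX, mulrSr); ring.
Qed.

Lemma h_gt u v : (u < v)%N -> hcnt u v = 0.
Proof.
move=> uv; apply: big1 => y _; have /and3P[_ b2 _] := K_bounds y.
case: eqP => // e0; case: eqP => // e1; lia.
Qed.

Lemma ysum (G : nat -> nat -> rat) :
  \sum_(y : {ffun 'I_n -> 'I_d}) G (K0 y) (K1 y) =
  \sum_(1 <= u < d.+1) (\sum_(1 <= v < u) G u v * hnv v + G u u * hdu u).
Proof.
rewrite partition_y; apply: eq_big_nat => u /andP[u1 ud].
rewrite (@big_cat_nat _ _ _ u) //=; last by apply: ltnW.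
rewrite [X in _ + X]big_ltn // h_eq //.
rewrite [X in _ + (_ + X)]big1_seq ?addr0; last first.
  by move=> v /andP[_]; rewrite mem_index_iota => /andP[uv _]; rewrite h_gt // mulr0.
congr (_ + _); apply: eq_big_nat => v /andP[v1 vu]; by rewrite h_lt.
Qed.

End Y.

Definition Gx (m a u v : nat) : rat :=
  (minn v a ^ m + m * (minn u a - minn v a) * minn v a ^ m.-1)%N%:R.

Lemma cnt_event (m a n d : nat) : (2 <= m)%N -> (2 <= n)%N -> (1 <= d)%N ->
  #|[set xy : {ffun 'I_m -> 'I_a} * {ffun 'I_n -> 'I_d} | defender_wins_both xy]|%:R =
  \sum_(1 <= u < d.+1) (\sum_(1 <= v < u) Gx m a u v * hnv n v + Gx m a u u * hdu n u) :> rat.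
Proof.
move=> hm hn hd.
rewrite card_sum natr_sum.
rewrite -(pair_bigA _ (fun x y => (defender_wins_both (x, y) : nat)%:R)) /= exchange_big /=.
rewrite -(ysum hn hd (Gx m a)); apply: eq_bigr => y _.
set U := kth_largest (dice_vals y) 0; set V := kth_largest (dice_vals y) 1.
have /and3P[_ VU _] := K_bounds hn y.
rewrite (eq_bigr (fun x => ((cnt U x == 0%N) && (cnt V x <= 1)%N)%N%:R)); last first.
  move=> x _; rewrite /defender_wins_both /= (kth_char (k:=0)) ?(kth_char (k:=1)) ?leqn0 //.
  by apply: leq_trans hm.
rewrite -natr_sum -(card_sum (fun x : {ffun 'I_m -> 'I_a} => (cnt U x == 0%N) && (cnt V x <= 1)%N)).
by rewrite count_P.
Qed.

Lemma Gx_le m a u v : (v <= u)%N -> (u <= a)%N ->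
  Gx m a u v = m%:R * (u%:R - v%:R) * v%:R ^+ m.-1 + v%:R ^+ m.
Proof.
move=> vu ua; rewrite /Gx (minn_idPl ua) (minn_idPl (leq_trans vu ua)).
by rewrite natrD !natrM natrB // !natrX addrC.
Qed.

Lemma Gx_gt m a u v : (v <= a)%N -> (a <= u)%N ->
  Gx m a u v = m%:R * (a%:R - v%:R) * v%:R ^+ m.-1 + v%:R ^+ m.
Proof.
move=> va au; rewrite /Gx (minn_idPl va) (minn_idPr au).
by rewrite natrD !natrM natrB // !natrX addrC.
Qed.

Lemma Gx_top m a u v : (a <= v)%N -> (a <= u)%N -> Gx m a u v = a%:R ^+ m.
Proof.
move=> av au; rewrite /Gx (minn_idPr av) (minn_idPr au) subnn muln0 mul0n addn0.
by rewrite natrX.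
Qed.

Lemma part1 (m a n N : nat) : (1 <= N)%N -> (N <= a)%N ->
  \sum_(1 <= u < N.+1) (\sum_(1 <= v < u) Gx m a u v * hnv n v + Gx m a u u * hdu n u) =
  \sum_(2 <= y1 < N.+1) \sum_(1 <= y2 < y1)
    (n%:R * ((y2%:R : rat) ^+ n.-1 - (y2.-1)%:R ^+ n.-1)
      * (m%:R * (y1%:R - y2%:R) * (y2%:R : rat) ^+ m.-1 + (y2%:R : rat) ^+ m))
  + \sum_(1 <= y1 < N.+1)
    (((y1%:R : rat) ^+ n - (y1.-1)%:R ^+ n - n%:R * (y1.-1)%:R ^+ n.-1)
      * (y1%:R : rat) ^+ m).
Proof.
move=> N1 Na; rewrite big_split /=; congr (_ + _).
  rewrite big_ltn // big_geq // add0r; apply: eq_big_nat => u /andP[u2 uN].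
  apply: eq_big_nat => v /andP[v1 vu].
  rewrite Gx_le ?(ltnW vu) //; last by apply: leq_trans Na; rewrite -ltnS.
  by rewrite /hnv mulrC.
apply: eq_big_nat => u /andP[u1 uN].
rewrite Gx_le //; last by apply: leq_trans Na; rewrite -ltnS.
by rewrite subrr mulr0 mul0r add0r /hdu mulrC.
Qed.

Lemma inner_tel (n a k : nat) :
  \sum_(a.+1 <= v < a.+1 + k) hnv n v = n%:R * (((a + k)%:R : rat) ^+ n.-1 - a%:R ^+ n.-1).
Proof.
elim: k => [|k IH].
  by rewrite !addn0 big_geq // subrr mulr0.
rewrite addnS big_nat_recr /=; last by apply: leq_addr.
rewrite IH /hnv addSn /= addnS; ring.
Qed.

Lemma outer_tel (n a k : nat) :
  \sum_(a.+1 <= u < (a + k).+1) (\sum_(a.+1 <= v < u) hnv n v + hdu n u) =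
  ((a + k)%:R : rat) ^+ n - n%:R * ((a + k)%:R - a%:R) * a%:R ^+ n.-1 - a%:R ^+ n.
Proof.
elim: k => [|k IH].
  by rewrite !addn0 big_geq // subrr mulr0 mul0r subr0 subrr.
rewrite addnS big_nat_recr /=; last by rewrite ltnS leq_addr.
rewrite IH -addSn inner_tel /hdu !addSn /= !mulrSr; ring.
Qed.

Lemma part2 (m a n d : nat) : (1 <= n)%N -> (a <= d)%N ->
  \sum_(a.+1 <= u < d.+1) (\sum_(1 <= v < u) Gx m a u v * hnv n v + Gx m a u u * hdu n u) =
  \sum_(a.+1 <= y1 < d.+1) \sum_(1 <= y2 < a.+1)
    (n%:R * ((y2%:R : rat) ^+ n.-1 - (y2.-1)%:R ^+ n.-1)
      * (m%:R * (a%:R - y2%:R) * (y2%:R : rat) ^+ m.-1 + (y2%:R : rat) ^+ m))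
  + ((a%:R : rat) ^+ m * (d%:R : rat) ^+ n
          - n%:R * (d%:R - a%:R) * (a%:R : rat) ^+ (n + m).-1
          - (a%:R : rat) ^+ (m + n)).
Proof.
move=> n1 ad.
transitivity (\sum_(a.+1 <= u < d.+1) (\sum_(1 <= v < a.+1)
    (n%:R * ((v%:R : rat) ^+ n.-1 - (v.-1)%:R ^+ n.-1)
      * (m%:R * (a%:R - v%:R) * (v%:R : rat) ^+ m.-1 + (v%:R : rat) ^+ m))
   + (a%:R : rat) ^+ m * (\sum_(a.+1 <= v < u) hnv n v + hdu n u))).
  apply: eq_big_nat => u /andP[au ud].
  rewrite (@big_cat_nat _ _ _ a.+1) //=.
  rewrite [Gx m a u u]Gx_top ?(ltnW au) //.
  rewrite [X in _ = _ + X]mulrDr mulr_sumr addrA.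
  have H1 : \sum_(1 <= i < a.+1) Gx m a u i * hnv n i = \sum_(1 <= v < a.+1)
    (n%:R * ((v%:R : rat) ^+ n.-1 - (v.-1)%:R ^+ n.-1)
      * (m%:R * (a%:R - v%:R) * (v%:R : rat) ^+ m.-1 + (v%:R : rat) ^+ m)).
    apply: eq_big_nat => v /andP[v1 va]; rewrite Gx_gt ?(ltnW au) //.
    by rewrite /hnv mulrC.
  have H2 : \sum_(a.+1 <= i < u) Gx m a u i * hnv n i =
     \sum_(a.+1 <= i < u) a%:R ^+ m * hnv n i.
    apply: eq_big_nat => v /andP[av vu]; rewrite Gx_top //; apply: ltnW => //.
  by rewrite H1 H2.
rewrite big_split /=; congr (_ + _).
rewrite -mulr_sumr.
have [k ->] : exists k, d = (a + k)%N by exists (d - a)%N; rewrite subnKC.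
rewrite outer_tel.
have -> : (n + m).-1 = (n.-1 + m)%N by rewrite -subn1 addnC -addnBA // addnC subn1.
rewrite !exprD; ring.
Qed.

Theorem proposition6p4 (a d m n : nat) (ha : (1 <= a)%N) (hd : (1 <= d)%N)
    (hm : (2 <= m)%N) (hn : (2 <= n)%N) :
  let D : rat := (a ^ m * d ^ n)%:R in
  let T1 (y1 y2 : nat) : rat :=
    (n%:R * ((y2%:R : rat) ^+ n.-1 - (y2.-1)%:R ^+ n.-1)
      * (m%:R * (y1%:R - y2%:R) * (y2%:R : rat) ^+ m.-1 + (y2%:R : rat) ^+ m)) / D in
  let T2 (y1 : nat) : rat :=
    (((y1%:R : rat) ^+ n - (y1.-1)%:R ^+ n - n%:R * (y1.-1)%:R ^+ n.-1)
      * (y1%:R : rat) ^+ m) / D in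
  ((d <= a)%N ->
     prob_event m a n d =
       \sum_(2 <= y1 < d.+1) \sum_(1 <= y2 < y1) T1 y1 y2
       + \sum_(1 <= y1 < d.+1) T2 y1) /\
  ((a <= d)%N ->
     prob_event m a n d =
       \sum_(2 <= y1 < a.+1) \sum_(1 <= y2 < y1) T1 y1 y2
       + \sum_(1 <= y1 < a.+1) T2 y1
       + \sum_(a.+1 <= y1 < d.+1) \sum_(1 <= y2 < a.+1) T1 a y2
       + ((a%:R : rat) ^+ m * (d%:R : rat) ^+ n
          - n%:R * (d%:R - a%:R) * (a%:R : rat) ^+ (n + m).-1
          - (a%:R : rat) ^+ (m + n)) / D).
Proof.
move=> D T1 T2; rewrite /T1 /T2.
have n1 : (1 <= n)%N by apply: ltnW.
split => h.
  rewrite /prob_event cnt_event //.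
  under [X in _ = X + _]eq_bigr do rewrite -mulr_suml.
  rewrite -!mulr_suml -mulrDl -/D; congr (_ / _).
  by rewrite part1.
rewrite /prob_event cnt_event //.
under [X in _ = X + _ + _ + _]eq_bigr do rewrite -mulr_suml.
under [X in _ = _ + _ + X + _]eq_bigr do rewrite -mulr_suml.
rewrite -!mulr_suml -!mulrDl -/D; congr (_ / _).
rewrite (@big_cat_nat _ _ _ a.+1) //= part1 // part2 //.
by rewrite addrA.
Qed.
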